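(* Let $\mathbb{F}$ be an algebraically closed field of characteristic not three and let $(\mathcal{O},* )$ be the Okubo algebra over $\mathbb{F}$. Then any two idempotents of $(\mathcal{O},* )$ (nonzero elements $f$ with $f*f=f$) are conjugate under the automorphism group $\mathrm{Aut}(\mathcal{O},* )$.
   Context: Since $\mathbb{F}$ is algebraically closed of characteristic $\neq 3$, it contains a primitive cube root of unity $\omega$. The Okubo algebra is the vector space $\mathcal{O}=\mathfrak{sl}_3(\mathbb{F})$ of trace-zero $3\times 3$ matrices with multiplication \[ x*y=\omega xy-\omega^2 yx-\frac{\omega-\omega^2}{3}\mathrm{tr}(xy)1, \] where juxtaposition is the usual matrix product. *)

(* Defs.v *)
From HB Require Import structures.
From mathcomp Require Import all_boot all_order all_algebra.
Set Implicit Arguments. Unset Strict Implicit. Unset Printing Implicit Defensive.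
Import GRing.Theory.
Local Open Scope ring_scope.

(* The underlying space of the Okubo algebra: sl_3(F), trace-zero 3x3 matrices. *)
Definition sl3 {F : fieldType} (x : 'M[F]_3) : bool := \tr x == 0.

(* Okubo product  x*y = w xy - w^2 yx - (w - w^2)/3 tr(xy) 1  (defined on all
   3x3 matrices; it maps sl3 x sl3 into sl3). *)
Definition okubo_mul {F : fieldType} (w : F) (x y : 'M[F]_3) : 'M[F]_3 :=
  w *: (x *m y) - w ^+ 2 *: (y *m x)
  - ((w - w ^+ 2) / 3%:R * \tr (x *m y)) *: (1%:M : 'M[F]_3).

Definition okubo_idempotent {F : fieldType} (w : F) (f : 'M[F]_3) : Prop :=
  [/\ sl3 f, f != 0 & okubo_mul w f f = f].

(* It is represented by a function on all matrices whose restriction to sl3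
   is the automorphism (values outside sl3 are irrelevant). *)
Definition okubo_aut {F : fieldType} (w : F) (phi : 'M[F]_3 -> 'M[F]_3) : Prop :=
  [/\ (forall x, sl3 x -> sl3 (phi x)),
      (forall (a : F) x y, sl3 x -> sl3 y -> phi (a *: x + y) = a *: phi x + phi y),
      (forall x y, sl3 x -> sl3 y -> phi x = phi y -> x = y),
      (forall y, sl3 y -> exists2 x, sl3 x & phi x = y) &
      (forall x y, sl3 x -> sl3 y ->
         phi (okubo_mul w x y) = okubo_mul w (phi x) (phi y))].

(* Main.v *)
Require Import Defs.
From HB Require Import structures.
From mathcomp Require Import all_boot all_order all_algebra all_fingroup mxred.
From mathcomp Require Import ring.
Set Implicit Arguments. Unset Strict Implicit. Unset Printing Implicit Defensive.
Import GRing.Theory.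
Local Open Scope ring_scope.
Section Conj.
Variables (F : fieldType) (w : F) (Q : 'M[F]_3).
Hypothesis HQ : Q \in unitmx.
Definition cj (x : 'M[F]_3) := Q *m x *m invmx Q.

Lemma cj_tr x : \tr (cj x) = \tr x.
Proof. by rewrite /cj mxtrace_mulC mulmxA mulVmx // mul1mx. Qed.

Lemma cj_M x y : cj x *m cj y = cj (x *m y).
Proof. by rewrite /cj !mulmxA mulmxKV. Qed.

Lemma cj_1 : cj 1%:M = 1%:M.
Proof. by rewrite /cj mulmx1 mulmxV. Qed.

Lemma cj_lin (a : F) x y : cj (a *: x + y) = a *: cj x + cj y.
Proof. by rewrite /cj mulmxDr mulmxDl -scalemxAr -scalemxAl. Qed.

Lemma cj_Z (a : F) x : cj (a *: x) = a *: cj x.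
Proof. by rewrite /cj -scalemxAr -scalemxAl. Qed.

Lemma cj_B x y : cj (x - y) = cj x - cj y.
Proof. by rewrite /cj mulmxBr mulmxBl. Qed.

Lemma cj_aut : okubo_aut w cj.
Proof.
split.
- by move=> x; rewrite /sl3 cj_tr.
- by move=> a x y _ _; rewrite cj_lin.
- move=> x y _ _ H.
  have := congr1 (fun z => invmx Q *m z *m Q) H.
  by rewrite /cj !mulmxA !mulVmx // !mul1mx !mulmxKV.
- move=> y Hy; exists (invmx Q *m y *m Q).
    by rewrite /sl3 mxtrace_mulC mulmxA mulmxV // mul1mx.
  by rewrite /cj !mulmxA mulmxV // mul1mx -mulmxA mulmxV // mulmx1.
- move=> x y _ _; rewrite /okubo_mul !cj_B !cj_Z cj_1 !cj_M.
  by rewrite cj_tr.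
Qed.
End Conj.
Lemma w_rel (F : fieldType) (w : F) : 3.-primitive_root w -> w ^+ 2 + w + 1 = 0.
Proof.
move=> hw.
have h3 : w ^+ 3 = 1 by rewrite prim_expr_order.
have h1 : w != 1 by rewrite -[w]expr1 -(prim_order_dvd hw 1).
have : (w - 1) * (w ^+ 2 + w + 1) = 0.
  by transitivity (w ^+ 3 - 1); [ring | rewrite h3 subrr].
by move/eqP; rewrite mulf_eq0 subr_eq0 (negbTE h1) /= => /eqP.
Qed.

Lemma idem_g (F : fieldType) (w : F) (hw : 3.-primitive_root w)
  (h3 : (3%:R : F) != 0) e : okubo_idempotent w e ->
  [/\ \tr ((w - w^+2) *: e) = 0, (w - w^+2) *: e != 0 &
   ((w - w^+2) *: e) *m ((w - w^+2) *: e) - (w - w^+2) *: e = (- \tr (e *m e))%:M].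
Proof.
move=> [/eqP he hne hm].
have hc2 : (w - w^+2) ^+ 2 = - 3%:R.
  have h3' := prim_expr_order hw; have hr := w_rel hw.
  transitivity ((w ^+ 2 + w + 1) - 3%:R + w ^+ 3 * w - w + (w ^+ 3 - 1) * (-2)); first ring.
  by rewrite hr h3'; ring.
have hc : w - w^+2 != 0.
  by apply/negP => /eqP hc0; move: hc2; rewrite hc0 expr0n /= => /eqP; rewrite eq_sym oppr_eq0 (negbTE h3).
split.
- by rewrite mxtraceZ he mulr0.
- by rewrite scaler_eq0 negb_or hc.
- set c := w - w^+2; set t := \tr (e *m e).
  rewrite -scalemxAl -scalemxAr scalerA -expr2 hc2.
  have he' : c *: e = (- 3%:R) *: (e *m e) + t *: 1%:M.
    have hcoef : c * (c / 3%:R * t) = - t.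
      have -> : c * (c / 3%:R * t) = c ^+ 2 * t / 3%:R by rewrite expr2; field.
      by rewrite hc2; field.
    rewrite -{1}hm /okubo_mul -/c -scalerBl scalerBr !scalerA -expr2 hc2.
    by rewrite hcoef [(- t) *: _]scaleNr opprK.
  rewrite he'.
  rewrite (opprD (_ *: (e *m e))) addrA subrr add0r -scaleNr.
  by rewrite scalemx1.
Qed.
Lemma sum3 (F : fieldType) (f : 'I_3 -> F) :
  \sum_j f j = f (inord 0) + f (inord 1) + f (inord 2).
Proof.
rewrite !big_ord_recr big_ord0 /= add0r.
by congr (_ + _ + _); congr f; apply/val_inj; rewrite /= inordK.
Qed.

Lemma all3 (P : 'I_3 -> Prop) : P (inord 0) -> P (inord 1) -> P (inord 2) ->
  forall i, P i.
Proof.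
move=> h0 h1 h2 [m Hm].
have -> : Ordinal Hm = inord m by apply/val_inj; rewrite /= inordK.
by case: m Hm => [|[|[|m]]].
Qed.

Lemma inord_eq3 m n : (m < 3)%N -> (n < 3)%N ->
  (inord m == inord n :> 'I_3) = (m == n).
Proof. by move=> hm hn; rewrite -val_eqE /= !inordK. Qed.

Lemma key0 (F : closedFieldType) (g : 'M[F]_3) (s : F) : (3%:R : F) != 0 ->
  \tr g = 0 -> g != 0 -> g *m g - g = s%:M ->
  exists a : F, exists2 P, P \in unitmx &
    exists D : 'rV[F]_3, [/\ P *m g = diag_mx D *m P, a != 1 - a &
      forall i, D 0 i = a \/ D 0 i = 1 - a].
Proof.
move=> h3 htr hg hs.
have [a ha] : exists a : F, a ^+ 2 = s + a.
  have [x hx] := @GRing.solve_monicpoly F 2 (nth 0 [:: s; 1]) isT.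
  by exists x; rewrite hx !big_ord_recl big_ord0 /= expr0 mulr1 expr1 mul1r addr0.
exists a.
set b := 1 - a.
have hpoly : ('X - a%:P) * ('X - b%:P) = 'X^2 - 'X - s%:P :> {poly F}.
  have -> : s = a ^+ 2 - a by rewrite ha addrK.
  by rewrite /b !rmorphB rmorphXn /= rmorph1; ring.
have hmin : horner_mx g ('X^2 - 'X - s%:P) = 0.
  rewrite !rmorphB /= rmorphXn /= horner_mx_X horner_mx_C.
  by rewrite expr2; change (g *m g - g - s%:M = 0); rewrite hs subrr.
have hdv : mxminpoly g %| ('X - a%:P) * ('X - b%:P).
  by rewrite hpoly; exact: mxminpoly_min.
have hroots : forall z, root (char_poly g) z -> z = a \/ z = b.
  move=> z hz; rewrite -root_mxminpoly in hz.
  have := root_dvdp hdv hz; rewrite rootM !root_XsubC.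
  by case/orP => /eqP; [left|right].
case: (eqVneq a b) => [hab|hab].
  exfalso.
  have [r hr] := closed_field_poly_normal (char_poly g).
  rewrite (monicP (char_poly_monic g)) scale1r in hr.
  have hsz := size_char_poly g; rewrite hr size_prod_XsubC in hsz.
  case: r hr hsz => [|z0 [|z1 [|z2 [|]]]] //= hr _.
  have := @coefPn_prod_XsubC _ [:: z0; z1; z2] isT; rewrite /= -hr.
  rewrite (char_poly_trace g isT) htr !big_cons big_nil addr0 => /eqP.
  rewrite oppr0 eq_sym oppr_eq0 => /eqP hsum.
  have hz : forall z, z \in [:: z0; z1; z2] -> z = a.
    move=> z hz; have : root (char_poly g) z by rewrite hr root_prod_XsubC.
    by case/hroots => // ->; rewrite hab.
  have [e0 e1 e2] : [/\ z0 = a, z1 = a & z2 = a].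
    by split; apply: hz; rewrite !inE eqxx ?orbT.
  rewrite e0 e1 e2 in hsum.
  have ha0 : a = 0.
    have : a * 3%:R = 0 by rewrite -hsum; ring.
    by move/eqP; rewrite mulf_eq0 (negbTE h3) orbF => /eqP.
  by move: hab; rewrite /b ha0 subr0 => /eqP; rewrite eq_sym oner_eq0.
have hdg : exists2 P, P \in unitmx & similar_diag P g.
  apply/(@diagonalizableP F 2 g); exists [:: a; b]; first by rewrite /= inE hab.
  by rewrite !big_cons big_nil mulr1.
have [P hP hPg] := hdg.
have /similar_diagPex [D hD] := hPg.
exists P => //; exists D; split => //.
- by apply/(similarP hP).
- move=> i.
  have hDm : diag_mx D = P *m g *m invmx P by apply/(similarRL hP).
  have e1 : diag_mx D *m diag_mx D - diag_mx D = s%:M.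
    have hc : forall x y, (P *m x *m invmx P) *m (P *m y *m invmx P) = P *m (x *m y) *m invmx P.
      by move=> x y; rewrite !mulmxA mulmxKV.
    rewrite hDm hc -mulmxBl -mulmxBr hs scalar_mxC -mulmxA mulmxV //.
    by rewrite mulmx1.
  have e2 : (diag_mx D *m diag_mx D - diag_mx D) i i = s%:M i i by rewrite e1.
  rewrite mulmx_diag !mxE eqxx !mulr1n in e2.
  have : (D 0 i - a) * (D 0 i - b) = 0.
    transitivity ((D 0 i * D 0 i - D 0 i - s) - (a ^+ 2 - (s + a))); first by rewrite /b; ring.
    by rewrite e2 ha; ring.
  by move/eqP; rewrite mulf_eq0 !subr_eq0 => /orP [] /eqP; [left|right].
Qed.
Lemma arith3 (F : fieldType) (a x0 x1 x2 : F) : (3%:R : F) != 0 ->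
  x0 + x1 + x2 = 0 -> (x0 = a \/ x0 = 1 - a) -> (x1 = a \/ x1 = 1 - a) ->
  (x2 = a \/ x2 = 1 - a) -> ~ [/\ x0 = 0, x1 = 0 & x2 = 0] ->
  [\/ [/\ x0 = 2%:R, x1 = -1 & x2 = -1], [/\ x0 = -1, x1 = 2%:R & x2 = -1]
    | [/\ x0 = -1, x1 = -1 & x2 = 2%:R]].
Proof.
move=> h3 H h0 h1 h2 hnz.
have m1 : forall y : F, y + 1 = 0 -> y = -1.
  by move=> y /eqP; rewrite addr_eq0 => /eqP.
have p2 : forall y : F, 2%:R - y = 0 -> y = 2%:R.
  by move=> y /eqP; rewrite subr_eq0 => /eqP.
have z3 : forall y : F, y * 3%:R = 0 -> y = 0.
  by move=> y /eqP; rewrite mulf_eq0 (negbTE h3) orbF => /eqP.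
case: h0 => -> in H hnz *; case: h1 => -> in H hnz *; case: h2 => -> in H hnz *.
- have ha : a = 0 by apply: z3; rewrite -H; ring.
  by exfalso; apply: hnz; rewrite ha.
- have ha : a = -1 by apply: m1; rewrite -H; ring.
  by constructor 3; rewrite ha; split; ring.
- have ha : a = -1 by apply: m1; rewrite -H; ring.
  by constructor 2; rewrite ha; split; ring.
- have ha : a = 2%:R by apply: p2; rewrite -H; ring.
  by constructor 1; rewrite ha; split; ring.
- have ha : a = -1 by apply: m1; rewrite -H; ring.
  by constructor 1; rewrite ha; split; ring.
- have ha : a = 2%:R by apply: p2; rewrite -H; ring.
  by constructor 2; rewrite ha; split; ring.
- have ha : a = 2%:R by apply: p2; rewrite -H; ring.
  by constructor 3; rewrite ha; split; ring.
- have ha : 1 - a = 0 by apply: z3; rewrite -H; ring.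
  by exfalso; apply: hnz; rewrite ha.
Qed.
Definition E3 (F : fieldType) : 'M[F]_3 :=
  diag_mx (\row_(i < 3) (if i == ord0 then 2%:R else -1)).

Lemma perm_diag (F : fieldType) (D : 'rV[F]_3) (k : 'I_3) :
  (forall i, D 0 i = if i == k then 2%:R else -1) ->
  perm_mx (tperm ord0 k) *m diag_mx D = E3 F *m perm_mx (tperm ord0 k).
Proof.
move=> hD; set s := tperm ord0 k.
have hs : s^-1%g = s by rewrite tpermV.
rewrite -row_permE -[in RHS]hs -col_permE.
apply/matrixP => i j; rewrite !mxE.
rewrite -[j in (s i == j)](tpermK ord0 k) (inj_eq perm_inj) -/s.
case: eqP => [->|]; rewrite ?mulr0n // !mulr1n.
rewrite /s tpermK hD -[X in tperm ord0 k j == X](tpermR ord0 k) (inj_eq perm_inj).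
by [].
Qed.

Lemma key (F : closedFieldType) (g : 'M[F]_3) (s : F) : (3%:R : F) != 0 ->
  \tr g = 0 -> g != 0 -> g *m g - g = s%:M ->
  exists2 P, P \in unitmx & P *m g = E3 F *m P.
Proof.
move=> h3 htr hg hs.
have [a [P hP [D [hPD hab hD]]]] := key0 h3 htr hg hs.
have hgD : g = invmx P *m diag_mx D *m P by rewrite -mulmxA -hPD mulKmx.
have hsum : D 0 (inord 0) + D 0 (inord 1) + D 0 (inord 2) = 0.
  have ht : \tr g = \tr (diag_mx D).
    by rewrite hgD mxtrace_mulC mulmxA mulmxV // mul1mx.
  by rewrite -sum3 -mxtrace_diag -ht htr.
have hnz : ~ [/\ D 0 (inord 0) = 0, D 0 (inord 1) = 0 & D 0 (inord 2) = 0].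
  case=> z0 z1 z2; move/eqP: hg; apply; rewrite hgD.
  have hz := all3 (P := fun i => D 0 i = 0) z0 z1 z2.
  have -> : diag_mx D = 0 by apply/matrixP=> i j; rewrite !mxE hz mul0rn.
  by rewrite mulmx0 mul0mx.
have fin : forall k : 'I_3, (forall i, D 0 i = if i == k then 2%:R else -1) ->
    exists2 P', P' \in unitmx & P' *m g = E3 F *m P'.
  move=> k hk; exists (perm_mx (tperm ord0 k) *m P).
    by rewrite unitmx_mul unitmx_perm hP.
  by rewrite -mulmxA hPD mulmxA perm_diag // mulmxA.
have := arith3 h3 hsum (hD _) (hD _) (hD _) hnz.
case=> [[d0 d1 d2]|[d0 d1 d2]|[d0 d1 d2]].
- apply: (fin (inord 0)); apply: all3; rewrite inord_eq3 //=; by rewrite ?d0 ?d1 ?d2.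
- apply: (fin (inord 1)); apply: all3; rewrite inord_eq3 //=; by rewrite ?d0 ?d1 ?d2.
- apply: (fin (inord 2)); apply: all3; rewrite inord_eq3 //=; by rewrite ?d0 ?d1 ?d2.
Qed.

Theorem theorem5p4 (F : closedFieldType) (hchar : 3%N \notin [pchar F])
  (w : F) (hw : 3.-primitive_root w) (e f : 'M[F]_3) :
  okubo_idempotent w e -> okubo_idempotent w f ->
  exists phi : 'M[F]_3 -> 'M[F]_3, okubo_aut w phi /\ phi e = f.
Proof.
move=> he hf.
have h3 : (3%:R : F) != 0.
  by move: hchar; rewrite inE negb_and => /orP [] //; rewrite (isT : prime 3).
have [te ge0 ges] := idem_g hw h3 he.
have [tf gf0 gfs] := idem_g hw h3 hf.
have [Pe hPe hPeg] := key h3 te ge0 ges.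
have [Pf hPf hPfg] := key h3 tf gf0 gfs.
set c := w - w ^+ 2 in ge0 hPeg hPfg.
have hc : c != 0 by apply: contraNneq ge0 => ->; rewrite scale0r.
set Q := invmx Pf *m Pe.
have hQ : Q \in unitmx by rewrite unitmx_mul unitmx_inv hPf hPe.
have hgf : (c *: f) *m invmx Pf = invmx Pf *m E3 F.
  by rewrite -[c *: f](mulKmx hPf) hPfg -!mulmxA mulmxV // mulmx1.
have hQe : Q *m (c *: e) = (c *: f) *m Q.
  by rewrite /Q -mulmxA hPeg mulmxA -hgf mulmxA.
have hQe' : Q *m e = f *m Q.
  apply: (scalerI hc); by rewrite scalemxAr hQe scalemxAl.
exists (cj Q); split; first exact: cj_aut.
by rewrite /cj hQe' -mulmxA mulmxV // mulmx1.
Qed.
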